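(* Let $\Gamma$ be an embedding of $K_{n,n}$ in $S^3$ with vertex sets $V$ and $W$, and let $G \leq \mathrm{TSG}_+(\Gamma)$ be a subgroup isomorphic to $A_4$ or $A_5$. Then every element $g \in G$ satisfies $g(V) = V$ (and hence $g(W) = W$).
   Context: $K_{n,n}$ is the complete bipartite graph with vertex sets $V$, $W$ of $n$ vertices each; every vertex of $V$ is adjacent to every vertex of $W$, and there are no other edges. $\mathrm{TSG}_+(\Gamma)$ is the subgroup of $\mathrm{Aut}(K_{n,n})$ consisting of automorphisms induced by orientation preserving homeomorphisms of $(S^3,\Gamma)$. *)

(* Defs.v *)
From HB Require Import structures.
From mathcomp Require Import all_boot all_order all_algebra all_fingroup all_solvable.
From mathcomp Require Import all_classical all_reals all_analysis.
Set Implicit Arguments. Unset Strict Implicit. Unset Printing Implicit Defensive.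
Import Order.TTheory GRing.Theory Num.Theory.
Import numFieldNormedType.Exports.
Local Open Scope classical_set_scope.
Local Open Scope ring_scope.

Section KnnEmbedding.
Variable R : realType.
Variable n : nat.

Definition Knn_vert := ('I_n + 'I_n)%type.

Definition Knn_V : {set Knn_vert} := [set x | is_inl x].
Definition Knn_W : {set Knn_vert} := [set x | ~~ is_inl x].

Definition Knn_adj (x y : Knn_vert) : bool := is_inl x != is_inl y.

Definition Knn_Aut : {set {perm Knn_vert}} :=
  [set s : {perm Knn_vert} | [forall x, forall y, Knn_adj (s x) (s y) == Knn_adj x y]].

Local Notation pt := (matrix R 1 4).
Definition S3 : set pt := [set x | \sum_(i < 4) (x ord0 i) ^+ 2 = 1].

Definition I01 : set R := `[0, 1]%classic.
Definition I01o : set R := `]0, 1[%classic.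

Record Knn_embedding := {
  vpos : Knn_vert -> pt;
  arc : 'I_n -> 'I_n -> R -> pt;
  vpos_S3 : forall x, S3 (vpos x);
  vpos_inj : injective vpos;
  arc_cont : forall v w, {within I01, continuous (arc v w)};
  arc_inj : forall v w, {in I01 &, injective (arc v w)};
  arc_S3 : forall v w, arc v w @` I01 `<=` S3;
  arc_0 : forall v w, arc v w 0 = vpos (inl v);
  arc_1 : forall v w, arc v w 1 = vpos (inr w);
  arc_int_vert : forall v w x, ~ (arc v w @` I01o) (vpos x);
  arc_int_disj : forall v w v' w', (v, w) <> (v', w') ->
      arc v w @` I01o `&` arc v' w' @` I01 = set0
}.

Definition edge_img (G : Knn_embedding) (x y : Knn_vert) : set pt :=
  match x, y with
  | inl v, inr w => arc G v w @` I01
  | inr w, inl v => arc G v w @` I01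
  | _, _ => set0
  end.

Definition homeo_S3 (h : pt -> pt) : Prop :=
  [/\ forall x, S3 x -> S3 (h x), {within S3, continuous h} &
      exists k : pt -> pt, [/\ forall x, S3 x -> S3 (k x),
         {within S3, continuous k},
         forall x, S3 x -> k (h x) = x & forall x, S3 x -> h (k x) = x]].

Definition homotopic_to_id_S3 (h : pt -> pt) : Prop :=
  exists H : R -> pt -> pt,
    [/\ {within [set p : R * pt | I01 p.1 /\ S3 p.2],
           continuous (fun p : R * pt => H p.1 p.2)},
        forall t x, I01 t -> S3 x -> S3 (H t x),
        forall x, S3 x -> H 0 x = x &
        forall x, S3 x -> H 1 x = h x].

Definition or_pres_homeo_S3 (h : pt -> pt) : Prop :=
  homeo_S3 h /\ homotopic_to_id_S3 h.

Definition induced_by (G : Knn_embedding) (h : pt -> pt) (s : {perm Knn_vert}) : Prop :=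
  (forall x, h (vpos G x) = vpos G (s x)) /\
  (forall x y, Knn_adj x y -> h @` edge_img G x y = edge_img G (s x) (s y)).

Definition TSG_plus (G : Knn_embedding) : {set {perm Knn_vert}} :=
  [set s in Knn_Aut | `[< exists h, or_pres_homeo_S3 h /\ induced_by G h s >]].

End KnnEmbedding.

(* Main.v *)
Require Import Defs.
From HB Require Import structures.
From mathcomp Require Import all_boot all_order all_algebra all_fingroup all_solvable.
From mathcomp Require Import all_classical all_reals all_analysis.
Import numFieldNormedType.Exports.
Set Implicit Arguments. Unset Strict Implicit. Unset Printing Implicit Defensive.

Section Aux.
Local Open Scope group_scope.
Lemma noidx2 (gT : finGroupType) (G K : {group gT}) :
  (G \isog 'Alt_('I_4) \/ G \isog 'Alt_('I_5)) -> K \subset G -> #|G : K| = 2 -> False.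
Proof.
move=> hiso sKG iK.
have nKG := index2_normal sKG iK.
have oG : #|G| = (#|K| * 2)%N by rewrite -iK Lagrange.
case: hiso => hiso.
- have oA : #|'Alt_('I_4)| = 12.
    by apply: double_inj; rewrite -mul2n card_Alt card_ord.
  case/isogP: hiso => f injf fG.
  have oK : #|K| = 6.
    have : #|f @* G| = #|G| by rewrite card_injm.
    rewrite fG oA oG => h; apply/eqP; by rewrite -(eqn_pmul2r (isT : 0 < 2)) -h.
  have nK' : normal (f @* K) 'Alt_('I_4) by rewrite -fG morphim_normal.
  have oK' : #|f @* K| = 6 by rewrite card_injm.
  have prim : [primitive 'Alt_('I_4), on [set: 'I_4] | 'P].
    apply: (@ntransitive_primitive _ _ _ _ _ 2) => //.
    by have := Alt_trans 'I_4; rewrite card_ord.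
  case: (prim_trans_norm prim nK') => [sKC | trK].
  + have := aperm_faithful 'Alt_('I_4).
    rewrite /faithful => hf.
    have : (f @* K \subset [1])%g.
      exact: fintype.subset_trans sKC hf.
    by move/subset_leq_card; rewrite oK' cards1.
  + have := atrans_dvd trK; by rewrite cardsT card_ord oK'.
- have oA : #|'Alt_('I_5)| = 60.
    by apply: double_inj; rewrite -mul2n card_Alt card_ord.
  have oG' : #|G| = 60 by rewrite (card_isog hiso).
  have sG : simple G by rewrite (isog_simple hiso) simple_Alt5 // card_ord.
  case/simpleP: sG => _ /(_ K nKG) [] hK.
  + by move: oG; rewrite oG' hK cards1.
  + by move: iK; rewrite hK indexgg.
Qed.

Variable n : nat.

Definition presP : {set {perm Knn_vert n}} :=
  [set s : {perm Knn_vert n} | [forall x, is_inl (s x) == is_inl x]].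

Fact presP_group : group_set presP.
Proof.
apply/group_setP; split; first by rewrite inE; apply/forallP => x; rewrite perm1.
move=> s t; rewrite !inE => /forallP hs /forallP ht; apply/forallP => x.
by rewrite permM (eqP (ht _)) (eqP (hs _)).
Qed.
Canonical presP_grp := Group presP_group.

Lemma aut_xor (s : {perm Knn_vert n}) x y : s \in Knn_Aut n ->
  (is_inl (s x) (+) is_inl x) = (is_inl (s y) (+) is_inl y).
Proof.
rewrite inE => /forallP /(_ x) /forallP /(_ y) /eqP.
rewrite /Knn_adj.
by case: (is_inl (s x)); case: (is_inl x); case: (is_inl (s y)); case: (is_inl y).
Qed.

Lemma notpres_all (s : {perm Knn_vert n}) : s \in Knn_Aut n -> s \notin presP ->
  forall x, is_inl (s x) != is_inl x.
Proof.
move=> sA; rewrite inE negb_forall => /existsP [y hy] x.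
have := aut_xor x y sA.
by move: hy; case: (is_inl (s y)); case: (is_inl y); case: (is_inl (s x)); case: (is_inl x).
Qed.

Lemma notpres_mul (s t : {perm Knn_vert n}) : s \in Knn_Aut n -> t \in Knn_Aut n ->
  s \notin presP -> t \notin presP -> s * t \in presP.
Proof.
move=> sA tA hs ht; rewrite inE; apply/forallP => x; rewrite permM.
have := notpres_all sA hs x; have := notpres_all tA ht (s x).
by case: (is_inl (t (s x))); case: (is_inl (s x)); case: (is_inl x).
Qed.

Lemma all_pres (G : {group {perm Knn_vert n}}) :
  G \subset Knn_Aut n ->
  (G \isog 'Alt_('I_4) \/ G \isog 'Alt_('I_5)) -> G \subset presP.
Proof.
move=> sGA hiso; apply/fintype.subsetP => g0 Gg0; apply/negPn/negP => hg0.
set D := (G :&: presP)%G.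
have sDG : D \subset G by rewrite subsetIl.
have AG : {in G, forall s, s \in Knn_Aut n} by move=> s /(fintype.subsetP sGA).
have eq1 : G :\: D = g0 *: D.
  have sub1 : g0 *: D \subset G :\: D.
    apply/fintype.subsetP => y /lcosetP [s Ds ->]; rewrite finset.in_setD finset.in_setI.
    move: Ds; rewrite finset.in_setI => /andP [Gs ps].
    rewrite groupM // andbT.
    apply/negP => /andP [_ pm].
    have : (g0 * s) * s^-1 \in presP by rewrite groupM ?groupV.
    by rewrite mulgK (negPf hg0).
  have sub2 : g0^-1 *: (G :\: D) \subset D.
    apply/fintype.subsetP => y /lcosetP [s].
    rewrite finset.in_setD finset.in_setI negb_and => /andP [/orP [] ns Gs] ->.
      by rewrite Gs in ns.
    have Gi : g0^-1 \in G by rewrite groupV.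
    rewrite finset.in_setI (groupM Gi Gs) /=.
    have : g0^-1 \notin presP by apply/negP => h; move: hg0; rewrite -(invgK g0) groupV h.
    move=> hi; exact: (notpres_mul (AG _ Gi) (AG _ Gs) hi ns).
  apply/esym/eqP; rewrite eqEcard sub1 /= card_lcoset.
  by rewrite -(card_lcoset (G :\: D) g0^-1); apply: subset_leq_card.
have cG : #|G| = (#|D| * 2)%N.
  by rewrite -(cardsID D G) (finset.setIidPr sDG) eq1 card_lcoset muln2 addnn.
apply: (noidx2 hiso sDG).
have h := Lagrange sDG; rewrite cG in h.
apply/eqP; rewrite -(eqn_pmul2l (cardG_gt0 D)) h; exact: eqxx.
Qed.

End Aux.

Theorem lemma1 (R : realType) (n : nat) (Gam : Knn_embedding R n)
  (G : {group {perm Knn_vert n}}) :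
  G \subset TSG_plus Gam ->
  (G \isog 'Alt_('I_4) \/ G \isog 'Alt_('I_5)) ->
  forall g, g \in G -> (g @: Knn_V n = Knn_V n /\ g @: Knn_W n = Knn_W n).
Proof.
move=> sGT hiso g Gg.
have sGA : G \subset Knn_Aut n.
  apply: fintype.subset_trans sGT _; apply/fintype.subsetP => s; rewrite inE => /andP [] //.
have := fintype.subsetP (all_pres sGA hiso) g Gg; rewrite inE => /forallP hp.
split; apply/eqP; rewrite eqEcard card_imset ?leqnn ?andbT //; try exact: perm_inj;
  apply/fintype.subsetP => y /imsetP [x]; rewrite !inE => hx ->; by rewrite (eqP (hp x)).
Qed.
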